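(* Let $\mathbf{F}$ be a Baire foliage tree on a topological space $X$ and let $A\subseteq X$ be at most countable. Then there is a Baire foliage tree $\mathbf{H}$ on the subspace $X\setminus A$ such that for every $p\in X\setminus A$ there is a strictly increasing function $f_p:\omega\to\omega$ with $$\{2n+1: n\in\omega\text{ and }f_p(n)\in\mathrm{rise}_{\mathbf{F}}(p,U)\}\subseteq\mathrm{rise}_{\mathbf{H}}(p,U\setminus A)$$ for all neighbourhoods $U$ of $p$ in $X$.
   Context: Neighbourhoods are not necessarily open. $\omega=\{0,1,2,\dots\}$, ${}^{<\omega}\omega$ is the set of finite sequences of natural numbers. A tree is a strict partial order in which the set of predecessors of every node is well-ordered; $\mathrm{height}(x)$ is the ordinal isomorphic to the set of predecessors of $x$; a branch is a maximal chain; $\mathrm{sons}(x)$ is the set of immediate successors of $x$; $0$ denotes the least node. A foliage tree is a pair $\mathbf{F}=(T,l)$ with $T$ a tree (skeleton) and $l$ a function on its nodes, $\mathbf{F}_x:=l(x)$; tree notions apply via the skeleton. $\mathrm{shoot}_{\mathbf{F}}(v)=\{\bigcup_{x\in C}\mathbf{F}_x: C\text{ a cofinite subset of }\mathrm{sons}_{\mathbf{F}}(v)\}$; $\mathrm{scope}_{\mathbf{F}}(p)=\{x:p\in\mathbf{F}_x\}$. For families $\gamma,\delta$ of sets, $\gamma\gg\delta$ means every nonempty $D\in\delta$ contains some nonempty $G\in\gamma$. $\mathrm{rise}_{\mathbf{F}}(p,U)=\{\mathrm{height}_{\mathbf{F}}(v): v\in\mathrm{scope}_{\mathbf{F}}(p),\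 \mathrm{shoot}_{\mathbf{F}}(v)\gg\{U\}\}$. $\mathbf{F}$ is locally strict if each non-maximal leaf $\mathbf{F}_x$ is the disjoint union of $\mathbf{F}_s$, $s\in\mathrm{sons}(x)$; has strict branches if it has a node and for each branch $B$, $\bigcap_{x\in B}\mathbf{F}_x$ is a singleton; is open in $X$ if all leaves are open in $X$; is a foliage $\omega,\omega$-tree if its skeleton is order-isomorphic to $({}^{<\omega}\omega,\subsetneq)$. A Baire foliage tree on $X$ is an open in $X$, locally strict foliage $\omega,\omega$-tree with strict branches and $\mathbf{F}_{0_{\mathbf{F}}}=X$. *)

(* Defs.v *)
From HB Require Import structures.
From mathcomp Require Import all_boot all_order.
From mathcomp Require Import boolp classical_sets functions cardinality topology.
Set Implicit Arguments.
Unset Strict Implicit.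
Unset Printing Implicit Defensive.
Local Open Scope classical_set_scope.

(* A foliage tree F = (T, l): skeleton T = a type of nodes with a strict
   order [tlt], and a labelling [leaf] of nodes by subsets of X. *)
Record foliage (X : Type) := Foliage {
  node : Type;
  tlt : node -> node -> Prop;
  leaf : node -> set X }.

Arguments node {X} f.
Arguments tlt {X} f _ _.
Arguments leaf {X} f _.

Section Foliage.
Context {X : Type} (F : foliage X).
Local Notation T := (node F).
Local Notation lt := (tlt F).

Definition sons (x : T) : set T :=
  [set y | lt x y /\ ~ (exists z, lt x z /\ lt z y)].

(* height(x) = k : the (well-ordered) set of predecessors of x has order type
   k; for a finite natural number k this means it has exactly k elements. *)
Definition height_is (x : T) (k : nat) : Prop :=
  card_eq [set y | lt y x] `I_k.

Definition is_chain (B : set T) : Prop :=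
  forall x y, B x -> B y -> x = y \/ lt x y \/ lt y x.

Definition is_branch (B : set T) : Prop :=
  is_chain B /\ forall C, is_chain C -> B `<=` C -> C = B.

Definition is_least (r : T) : Prop := forall x, x <> r -> lt r x.

Definition shoot (v : T) : set (set X) :=
  [set G | exists C : set T, C `<=` sons v /\ finite_set (sons v `\` C) /\
                             G = \bigcup_(x in C) leaf F x].

Definition scope (p : X) : set T := [set x | leaf F x p].

Definition locally_strict : Prop :=
  forall x, (exists y, lt x y) ->
    leaf F x = \bigcup_(s in sons x) leaf F s /\
    (forall s t, sons x s -> sons x t -> s <> t -> leaf F s `&` leaf F t = set0).

Definition strict_branches : Prop :=
  (exists x : T, True) /\
  forall B, is_branch B -> exists p, \bigcap_(x in B) leaf F x = [set p].

Definition omega_omega_tree : Prop :=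
  exists phi : T -> seq nat, bijective phi /\
    forall x y, lt x y <-> (prefix (phi x) (phi y) /\ phi x <> phi y).

End Foliage.
Arguments sons {X} F x.
Arguments height_is {X} F x k.
Arguments is_chain {X} F B.
Arguments is_branch {X} F B.
Arguments is_least {X} F r.
Arguments shoot {X} F v.
Arguments scope {X} F p.
Arguments locally_strict {X} F.
Arguments strict_branches {X} F.
Arguments omega_omega_tree {X} F.

Definition gg {X : Type} (gamma delta : set (set X)) : Prop :=
  forall D, delta D -> D <> set0 ->
    exists G, gamma G /\ G <> set0 /\ G `<=` D.

Definition rise {X : Type} (F : foliage X) (p : X) (U : set X) : set nat :=
  [set k | exists v, scope F p v /\ height_is F v k /\ gg (shoot F v) [set U]].

Definition open_in {X : topologicalType} (Y S : set X) : Prop :=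
  exists V, open V /\ S = V `&` Y.

(* Baire foliage tree on the subspace Y of X (leaves are subsets of X). *)
Definition baire_foliage_on {X : topologicalType} (Y : set X) (F : foliage X) : Prop :=
  (forall x, open_in Y (leaf F x)) /\
  locally_strict F /\
  omega_omega_tree F /\
  strict_branches F /\
  (exists r, is_least F r /\ leaf F r = Y).

(* Main.v *)
Require Import Defs.
From HB Require Import structures.
From mathcomp Require Import all_boot all_order.
From mathcomp Require Import boolp classical_sets functions cardinality topology.
From Stdlib Require Cantor.
From mathcomp Require Import zify.
From Stdlib Require Import Lia.
Set Implicit Arguments.
Unset Strict Implicit.
Unset Printing Implicit Defensive.
Local Open Scope classical_set_scope.

Definition sp (s t : seq nat) : Prop := prefix s t /\ s <> t.

Lemma prefix_size (s t : seq nat) : prefix s t -> (size s <= size t)%N.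
Proof. by move=> /prefixP[u ->]; rewrite size_cat leq_addr. Qed.

Lemma prefix_takeE (s t : seq nat) : prefix s t -> s = take (size s) t.
Proof. by rewrite prefixE => /eqP. Qed.

Lemma prefix_eq_size (s t : seq nat) : prefix s t -> size s = size t -> s = t.
Proof. by move=> st E; rewrite (prefix_takeE st) E take_size. Qed.

Lemma sp_size (s t : seq nat) : sp s t -> (size s < size t)%N.
Proof.
move=> [st nst]; rewrite ltn_neqAle prefix_size // andbT.
by apply/eqP => E; apply: nst; apply: prefix_eq_size.
Qed.

Lemma prefix_comm (s t u : seq nat) : prefix s u -> prefix t u ->
  prefix s t \/ prefix t s.
Proof.
move=> /prefix_takeE Es /prefix_takeE Et.
case: (leqP (size s) (size t)) => H.
  left; rewrite {1}Es {1}Et -(take_takel u H); exact: prefix_take.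
right; rewrite {1}Es {1}Et -(take_takel u (ltnW H)); exact: prefix_take.
Qed.

Lemma sp_rcons (s : seq nat) i : sp s (rcons s i).
Proof.
split; first exact: prefix_rcons.
by move=> E; have := congr1 size E; rewrite size_rcons => /n_Sn.
Qed.

Lemma sons_sp (s t : seq nat) :
  (sp s t /\ ~ (exists z, sp s z /\ sp z t)) <-> exists i, t = rcons s i.
Proof.
split.
  move=> [[st nst] nz].
  have lt := sp_size (conj st nst).
  set z := take (size s).+1 t.
  have Ez : z = rcons s (nth 0 t (size s)).
    by rewrite /z (take_nth 0) // -(prefix_takeE st).
  case: (eqVneq z t) => [zt|zt].
    by exists (nth 0 t (size s)); rewrite -Ez zt.
  exfalso; apply: nz; exists z; split; first by rewrite Ez; exact: sp_rcons.
  split; [exact: prefix_take | exact/eqP].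
move=> [i ->]; split; first exact: sp_rcons.
move=> [z [/sp_size h1 /sp_size h2]]; rewrite size_rcons in h2.
by move: (leq_ltn_trans h1 h2); rewrite ltnn.
Qed.

Lemma height_seq (s : seq nat) : card_eq [set y | sp y s] `I_(size s).
Proof.
apply/card_set_bijP; exists size; split.
- move=> y /sp_size h; exact h.

- move=> y z; rewrite !in_setE => -[ys _] [zs _] E.
  by rewrite (prefix_takeE ys) (prefix_takeE zs) E.

- move=> k /= ks; exists (take k s); last by rewrite size_takel //; exact: ltnW.
  split; first exact: prefix_take.

  move=> E; have := congr1 size E; rewrite size_takel; last exact: ltnW.
  by move=> kE; move: ks; rewrite kE ltnn.
Qed.

Definition schain (B : set (seq nat)) :=
  forall x y, B x -> B y -> x = y \/ sp x y \/ sp y x.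

Lemma prefix_sp (x y : seq nat) : prefix x y -> x = y \/ sp x y.
Proof. by move=> xy; case: (eqVneq x y) => [->|/eqP ne]; [left|right]. Qed.

Lemma comp_schain (x y : seq nat) : prefix x y \/ prefix y x ->
  x = y \/ sp x y \/ sp y x.
Proof.
case=> /prefix_sp [->|h]; auto.
Qed.

Lemma schain_comp (B : set (seq nat)) x y : schain B -> B x -> B y ->
  prefix x y \/ prefix y x.
Proof.
move=> ch Bx By; case: (ch x y Bx By) => [->|[[h _]|[h _]]]; auto.
by left; exact: prefix_refl.
Qed.

Lemma schain_add (B : set (seq nat)) z : schain B ->
  (forall y, B y -> prefix y z \/ prefix z y) -> schain (B `|` [set z]).
Proof.
move=> ch hz x y [Bx|->] [By|->].
- exact: ch.
- exact: comp_schain (hz x Bx).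
- by apply: comp_schain; case: (hz y By); auto.
- by left.
Qed.

Lemma branch_seq (B : set (seq nat)) : schain B ->
  (forall C, schain C -> B `<=` C -> C = B) ->
  exists b : nat -> seq nat, (forall n, B (b n) /\ size (b n) = n) /\
    (forall x, B x -> x = b (size x)) /\ (forall n, prefix (b n) (b n.+1)).
Proof.
move=> ch mx.
have addB z : (forall y, B y -> prefix y z \/ prefix z y) -> B z.
  move=> hz; have := mx _ (schain_add ch hz) (fun y By => or_introl By).
  by move=> E; rewrite -E; right.
have cl1 x k : B x -> B (take k x).
  move=> Bx; apply: addB => y By.
  case: (schain_comp ch By Bx) => h.
    by apply: prefix_comm h _; exact: prefix_take.
  by right; apply: prefix_trans (prefix_take _ _) h.
have cl2 n : exists x, B x /\ (n <= size x)%N.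
  elim: n => [|n [x [Bx xn]]].
    by exists [::]; split => //; apply: addB => y _; right; exact: prefix0s.
  case: (leqP n.+1 (size x)) => h; first by exists x.
  have sx : size x = n by apply/eqP; rewrite eqn_leq xn -ltnS h.
  apply: contrapT => nex.
  have : B (rcons x 0).
    apply: addB => y By; left.
    case: (schain_comp ch By Bx) => h'.
      by apply: prefix_trans h' (prefix_rcons _ _).
    have : (size y <= n)%N.
      rewrite leqNgt; apply/negP => yn; apply: nex; exists y; split => //.
    rewrite -sx => ys; rewrite -(prefix_eq_size h' (eqP _)).
      exact: prefix_rcons.
    by rewrite eqn_leq ys prefix_size.
  by move=> Br; apply: nex; exists (rcons x 0); rewrite size_rcons sx.
pose b n := take n (proj1_sig (cid (cl2 n))).
have bB n : B (b n) /\ size (b n) = n.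
  rewrite /b; case: (cid (cl2 n)) => x [Bx xn] /=.
  by split; [exact: cl1|rewrite size_takel].
have uniq x y : B x -> B y -> size x = size y -> x = y.
  move=> Bx By E; case: (schain_comp ch Bx By) => h.
    exact: prefix_eq_size.
  by apply/esym; apply: prefix_eq_size.
exists b; split => //; split.
  by move=> x Bx; apply: uniq Bx (bB _).1 _; rewrite (bB _).2.
move=> n; case: (schain_comp ch (bB n).1 (bB n.+1).1) => // h.
by move: (prefix_size h); rewrite (bB n.+1).2 (bB n).2 ltnn.
Qed.

Section Part.
Variable X : Type.
Variable L : seq nat -> set X.
Hypothesis Lcov : forall s x, L s x <-> exists i, L (rcons s i) x.
Hypothesis Ldisj : forall s i j x, L (rcons s i) x -> L (rcons s j) x -> i = j.

Definition nxt x s := xget 0 [set i | L (rcons s i) x].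

Fixpoint pre x n := if n is n'.+1 then rcons (pre x n') (nxt x (pre x n')) else [::].

Lemma size_pre x n : size (pre x n) = n.
Proof. by elim: n => //= n IH; rewrite size_rcons IH. Qed.

Lemma nxtP x s : L s x -> L (rcons s (nxt x s)) x.
Proof. by move=> /Lcov [i hi]; exact: (@xgetI _ 0 [set i | L (rcons s i) x] i hi). Qed.

Lemma pre_mem x n : L [::] x -> L (pre x n) x.
Proof. by move=> h; elim: n => //= n IH; apply: nxtP. Qed.

Lemma pre_prefix x m n : (m <= n)%N -> prefix (pre x m) (pre x n).
Proof.
move=> /subnK <-; elim: (n - m)%N => [|k IH]; first exact: prefix_refl.
by rewrite addSn /=; apply: prefix_trans IH (prefix_rcons _ _).
Qed.

Lemma L_rcons s i : L (rcons s i) `<=` L s.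
Proof. by move=> x h; apply/Lcov; exists i. Qed.

Lemma L_mono s t : prefix s t -> L t `<=` L s.
Proof.
move=> /prefixP [u ->]; elim/last_ind: u => [|u i IH]; first by rewrite cats0.
by rewrite -rcons_cat => x /L_rcons /IH.
Qed.

Lemma mem_pre x s : L s x -> s = pre x (size s).
Proof.
elim/last_ind: s => [//|s i IH] h.
have Ls := L_rcons h; have E := IH Ls.
rewrite size_rcons /= -E; congr rcons; apply: Ldisj h _.
exact: nxtP.
Qed.

Lemma L_comp s t x : L s x -> L t x -> prefix s t \/ prefix t s.
Proof.
move=> /mem_pre -> /mem_pre ->.
case: (leqP (size s) (size t)) => h; [left|right]; apply: pre_prefix => //.
exact: ltnW.
Qed.

Lemma L_disj_rcons s i j x : i <> j -> L (rcons s i) x -> L (rcons s j) x -> False.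
Proof. by move=> ne a b; apply: ne; apply: Ldisj a b. Qed.

End Part.

Section FT.
Variable X : topologicalType.
Variable F : foliage X.
Variable phi : node F -> seq nat.
Variable psi : seq nat -> node F.
Hypothesis phiK : cancel phi psi.
Hypothesis psiK : cancel psi phi.
Hypothesis phi_lt : forall x y, tlt F x y <-> sp (phi x) (phi y).
Hypothesis Fopen : forall x, open_in setT (leaf F x).
Hypothesis Fls : locally_strict F.
Hypothesis Fsb : strict_branches F.
Hypothesis Froot : exists r, is_least F r /\ leaf F r = setT.

Definition LF s := leaf F (psi s).

Lemma leafE x : leaf F x = LF (phi x).
Proof. by rewrite /LF phiK. Qed.

Lemma F_sons x y : sons F x y <-> exists i, phi y = rcons (phi x) i.
Proof.
rewrite -sons_sp /sons /=; split.
  move=> [/phi_lt h nz]; split => // -[z [z1 z2]]; apply: nz.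
  by exists (psi z); rewrite !phi_lt psiK.
move=> [h nz]; split; first exact/phi_lt.
by move=> [z [/phi_lt z1 /phi_lt z2]]; apply: nz; exists (phi z).
Qed.

Lemma LF_cov s x : LF s x <-> exists i, LF (rcons s i) x.
Proof.
have ex : exists y, tlt F (psi s) y.
  by exists (psi (rcons s 0)); apply/phi_lt; rewrite !psiK; exact: sp_rcons.
have [E _] := Fls ex; rewrite /LF E; split.
  move=> [y /F_sons [i hi] hy]; exists i.
  by rewrite psiK in hi; rewrite -hi phiK.
move=> [i hi]; exists (psi (rcons s i)) => //.
by apply/F_sons; exists i; rewrite !psiK.
Qed.

Lemma LF_disj s i j x : LF (rcons s i) x -> LF (rcons s j) x -> i = j.
Proof.
move=> hi hj; apply: contrapT => ne.
have ex : exists y, tlt F (psi s) y.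
  by exists (psi (rcons s 0)); apply/phi_lt; rewrite !psiK; exact: sp_rcons.
have [_ D] := Fls ex.
have : (leaf F (psi (rcons s i)) `&` leaf F (psi (rcons s j))) x by split.
rewrite D //.
- by apply/F_sons; exists i; rewrite !psiK.
- by apply/F_sons; exists j; rewrite !psiK.
move=> /(congr1 phi); rewrite !psiK => /(congr1 (fun u => last 0 u)).
by rewrite !last_rcons.
Qed.

Lemma LF_root : LF [::] = setT.
Proof.
case: Froot => r [lr Er].
rewrite /LF; suff -> : psi [::] = r by [].
apply: contrapT => ne; have := lr _ ne => /phi_lt; rewrite psiK => -[h _].
by move: h; rewrite prefixs0 => /eqP h; apply: ne; rewrite -h phiK.
Qed.

Lemma LF_open s : open (LF s).
Proof. by rewrite /LF; case: (Fopen (psi s)) => V [oV ->]; rewrite setIT. Qed.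

Lemma chain_mono (P : nat -> seq nat) : (forall n, prefix (P n) (P n.+1)) ->
  forall m n, (m <= n)%N -> prefix (P m) (P n).
Proof.
move=> h m n /subnK <-; elim: (n - m)%N => [|k IH]; first exact: prefix_refl.
by rewrite addSn; apply: prefix_trans IH (h _).
Qed.

Lemma F_branch (P : nat -> seq nat) : (forall n, prefix (P n) (P n.+1)) ->
  (forall n, (n <= size (P n))%N) ->
  exists q, forall y, (forall n, LF (P n) y) <-> y = q.
Proof.
move=> hP hs.
pose B := [set x | exists n, prefix (phi x) (P n)].
have chB : is_chain F B.
  move=> x y [n hn] [m hm].
  have hx := prefix_trans hn (chain_mono hP (leq_maxl n m)).
  have hy := prefix_trans hm (chain_mono hP (leq_maxr n m)).
  case: (comp_schain (prefix_comm hx hy)) => [E|[h|h]].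
  - by left; rewrite -(phiK x) E phiK.
  - by right; left; apply/phi_lt.
  - by right; right; apply/phi_lt.
have brB : is_branch F B.
  split => // C chC BC; apply/seteqP; split => x; last exact: BC.
  move=> Cx; pose k := size (phi x).
  have Bz : B (psi (take k (P k))) by exists k; rewrite psiK; exact: prefix_take.
  have sz : size (phi (psi (take k (P k)))) = k by rewrite psiK size_takel.
  case: (chC _ _ Cx (BC _ Bz)) => [->//|[/phi_lt/sp_size|/phi_lt/sp_size]].
    by rewrite sz ltnn.
  by rewrite sz ltnn.
case: Fsb => _ /(_ B brB) [q Eq]; exists q => y.
rewrite -[y = q]/([set q] y) -Eq; split.
  move=> h x [n hn]; rewrite leafE; exact: (L_mono LF_cov hn (h n)).
move=> h n; apply: h; exists n; rewrite psiK; exact: prefix_refl.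
Qed.

End FT.

Lemma first_change (Q : nat -> Prop) s N : Q s -> ~ Q N -> (s <= N)%N ->
  exists m, (s <= m)%N /\ Q m /\ ~ Q m.+1.
Proof.
move=> Qs nQN; elim: N nQN => [|N IH] nQN.
  by rewrite leqn0 => /eqP E; subst s.
rewrite leq_eqVlt => /orP [/eqP E|]; first by subst s.
rewrite ltnS => sN; case: (pselect (Q N)) => QN.
  by exists N.
exact: IH.
Qed.

Section Dec.
Variable X : Type.
Variable L : seq nat -> set X.
Hypothesis Lcov : forall s x, L s x <-> exists i, L (rcons s i) x.
Hypothesis Ldisj : forall s i j x, L (rcons s i) x -> L (rcons s j) x -> i = j.
Hypothesis Lroot : forall x, L [::] x.
Hypothesis Lbr : forall P : nat -> seq nat, (forall n, prefix (P n) (P n.+1)) ->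
  (forall n, (n <= size (P n))%N) ->
  exists q, forall y, (forall n, L (P n) y) <-> y = q.

Local Notation pre := (pre L).
Local Notation nxt := (nxt L).

Definition skip (c j : nat) := if (j < c)%N then j else j.+1.

Lemma skip_neq c j : skip c j <> c.
Proof.
rewrite /skip; case: ltnP => h E; lia.
Qed.

Lemma skip_inj c : injective (skip c).
Proof.
move=> j j'; rewrite /skip; case: (ltnP j c) => h; case: (ltnP j' c) => h' //.
- lia.
- lia.
- lia.
Qed.

Definition Dnode (w : seq nat) (a : X) (i : nat) :=
  let kj := Cantor.of_nat i in
  let m := (size w + kj.1)%N in
  rcons (pre a m) (skip (nxt a (pre a m)) kj.2).

Lemma pre_take x n N : (n <= N)%N -> take n (pre x N) = pre x n.
Proof.
move=> h; have := prefix_takeE (pre_prefix L x h).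
by rewrite size_pre => <-.
Qed.

Lemma pre_agree x a n N : pre x N = pre a N -> (n <= N)%N -> pre x n = pre a n.
Proof. by move=> E h; rewrite -(pre_take x h) -(pre_take a h) E. Qed.

Lemma pre_all x : L (pre x 0) x /\ forall n, L (pre x n) x.
Proof. by split => [|n]; apply: pre_mem. Qed.

Lemma memL_pre x s : L s x <-> pre x (size s) = s.
Proof.
split; first by move=> h; rewrite -(mem_pre Lcov Ldisj h).
move=> <-; exact: pre_mem.
Qed.

Lemma Dnode_mem w a i x : L (Dnode w a i) x <->
  (pre x (size w + (Cantor.of_nat i).1).+1 =
   rcons (pre a (size w + (Cantor.of_nat i).1)) (skip (nxt a (pre a (size w + (Cantor.of_nat i).1))) (Cantor.of_nat i).2)).
Proof. by rewrite memL_pre /Dnode size_rcons size_pre. Qed.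

Lemma Dnode_prefix w a i : L w a -> sp w (Dnode w a i).
Proof.
move=> Lwa; split; last first.
  move=> E; have := congr1 size E; rewrite /Dnode size_rcons size_pre.
  move=> h; lia.
rewrite /Dnode; apply: prefix_trans (prefix_rcons _ _).
rewrite {1}(mem_pre Lcov Ldisj Lwa); apply: pre_prefix; exact: leq_addr.
Qed.

Lemma Dnode_nota w a i : ~ L (Dnode w a i) a.
Proof.
move/Dnode_mem => /= /rcons_inj [E]; exact: skip_neq (esym E).
Qed.

Lemma Dnode_disj w a i i' x : L (Dnode w a i) x -> L (Dnode w a i') x -> i = i'.
Proof.
move=> /Dnode_mem /= h /Dnode_mem /= h'.
case E : (Cantor.of_nat i) h => [k j]; case E' : (Cantor.of_nat i') h' => [k' j'] /= h' h.
have gen : forall k k' j j', pre x (size w + k).+1 = rcons (pre a (size w + k)) (skip (nxt a (pre a (size w + k))) j) ->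
    pre x (size w + k').+1 = rcons (pre a (size w + k')) (skip (nxt a (pre a (size w + k'))) j') ->
    (k < k')%N -> False.
  move=> {h h' E E'} k1 k1' j1 j1' h1 h1' lt.
  have := h1'; rewrite /= => /rcons_inj [E1 _].
  have lt2 : ((size w + k1).+1 <= size w + k1')%N by lia.
  have := pre_agree E1 lt2.
  rewrite h1 /= => /rcons_inj [E]; exact: skip_neq E.
case: (ltngtP k k') => c.
- by exfalso; apply: gen h h' c.
- by exfalso; apply: gen h' h c.
subst k'; move: h'; rewrite h => /rcons_inj [/skip_inj Ej]; subst j'.
by rewrite -(Cantor.cancel_to_of i) -(Cantor.cancel_to_of i') E E'.
Qed.

Lemma Dnode_cov w a x : L w a -> L w x -> x <> a -> exists i, L (Dnode w a i) x.
Proof.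
move=> Lwa Lwx nxa.
have Ew : pre a (size w) = w by apply/memL_pre.
have Ex : pre x (size w) = w by apply/memL_pre.
have [N hN] : exists N, pre x N <> pre a N.
  apply: contrapT => hn.
  have all : forall N, pre x N = pre a N.
    by move=> N; apply: contrapT => h; apply: hn; exists N.
  have [q hq] := Lbr (fun n => pre_prefix L a (leqnSn n)) (fun n => eq_leq (esym (size_pre L a n))).
  have ea := (hq a).1 (fun n => pre_mem Lcov n (Lroot a)).
  have ex : x = q.
    by apply: (hq x).1 => n; rewrite -all; exact: (pre_mem Lcov n (Lroot x)).
  by apply: nxa; rewrite ex ea.
have Es : pre x (size w) = pre a (size w) by rewrite Ex Ew.
have sN : (size w <= N)%N.
  rewrite leqNgt; apply/negP => lt; apply: hN.
  exact: pre_agree Es (ltnW lt).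
have [m [sm [Em nEm]]] := first_change (Q := fun n => pre x n = pre a n) Es hN sN.
pose c := nxt a (pre a m).
pose j := nxt x (pre a m).
have jc : j <> c by move=> jc; apply: nEm; rewrite /= Em -/j jc.
pose j1 := if (j < c)%N then j else j.-1.
have sk : skip c j1 = j.
  rewrite /skip /j1; case: (ltnP j c) => h; case: ltnP => h2; lia.
exists (Cantor.to_nat ((m - size w)%N, j1)).
apply/Dnode_mem; rewrite Cantor.cancel_of_to /= subnKC //.
by rewrite -/c sk /= Em.
Qed.

End Dec.

Section HT.
Variable X : Type.
Variable L : seq nat -> set X.
Hypothesis Lcov : forall s x, L s x <-> exists i, L (rcons s i) x.
Hypothesis Ldisj : forall s i j x, L (rcons s i) x -> L (rcons s j) x -> i = j.
Hypothesis Lroot : forall x, L [::] x.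
Hypothesis Lbr : forall P : nat -> seq nat, (forall n, prefix (P n) (P n.+1)) ->
  (forall n, (n <= size (P n))%N) ->
  exists q, forall y, (forall n, L (P n) y) <-> y = q.
Variable A : set X.
Variable e : X -> nat.
Hypothesis einj : forall a b, A a -> A b -> e a = e b -> a = b.

Definition minP w a := A a /\ L w a /\ forall b, A b -> L w b -> (e a <= e b)%N.

Lemma min_ex w : (exists a, A a /\ L w a) -> exists a, minP w a.
Proof.
move=> [a0 [Aa0 La0]]; apply: contrapT => nm.
have H : forall k a, A a -> L w a -> (k <= e a)%N.
  elim=> [//|k IH] a Aa La.
  have := IH a Aa La; rewrite leq_eqVlt => /orP [/eqP E|//].
  exfalso; apply: nm; exists a; split => //; split => // b Ab Lb.
  by rewrite -E; apply: IH.
by have := H (e a0).+1 a0 Aa0 La0; rewrite ltnn.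
Qed.

Lemma min_uniq w a b : minP w a -> minP w b -> a = b.
Proof.
move=> [Aa [La ma]] [Ab [Lb mb]]; apply: einj => //.
by apply/eqP; rewrite eqn_leq ma ?mb.
Qed.

Definition dec w i := match pselect (exists a, minP w a) with
  | left h => Dnode L w (proj1_sig (cid h)) i
  | right _ => rcons w i end.

Lemma dec_spec w : (exists a, minP w a /\ forall i, dec w i = Dnode L w a i) \/
  ((forall a, A a -> ~ L w a) /\ forall i, dec w i = rcons w i).
Proof.
rewrite /dec; case: pselect => h.
  by left; case: (cid h) => a ha /=; exists a.
right; split => // a Aa La; apply: h; apply: min_ex; by exists a.
Qed.

Definition child l w i := if odd l then rcons w i else dec w i.

Lemma child_sp l w i : sp w (child l w i).
Proof.
rewrite /child; case: (odd l); first exact: sp_rcons.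
case: (dec_spec w) => [[a [[_ [La _]] ->]]|[_ ->]]; last exact: sp_rcons.
exact: Dnode_prefix.
Qed.

Lemma child_sub l w i : L (child l w i) `<=` L w.
Proof. by apply: L_mono => //; case: (child_sp l w i). Qed.

Lemma child_cov l w x : (L w x /\ ~ A x) <-> exists i, L (child l w i) x /\ ~ A x.
Proof.
split; last by move=> [i [h nA]]; split => //; exact: child_sub h.
move=> [Lx nA]; rewrite /child; case: (odd l).
  by have [i hi] := (Lcov w x).1 Lx; exists i.
case: (dec_spec w) => [[a [[Aa [La _]] E]]|[_ E]].
  have [|i hi] := Dnode_cov Lcov Ldisj Lroot Lbr La Lx.
    by move=> xa; apply: nA; rewrite xa.
  by exists i; rewrite E.
by have [i hi] := (Lcov w x).1 Lx; exists i; rewrite E.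
Qed.

Lemma child_disj l w i j x : L (child l w i) x -> L (child l w j) x -> i = j.
Proof.
rewrite /child; case: (odd l); first exact: Ldisj.
case: (dec_spec w) => [[a [_ E]]|[_ E]]; rewrite !E; last exact: Ldisj.
exact: Dnode_disj.
Qed.

Fixpoint Phia v l s := if s is i :: s' then Phia (child l v i) l.+1 s' else v.
Definition Phi s := Phia [::] 0 s.

Lemma Phia_rcons v l s i : Phia v l (rcons s i) = child (l + size s) (Phia v l s) i.
Proof.
elim: s v l => [|j s IH] v l /=; first by rewrite addn0.
by rewrite IH addSnnS.
Qed.

Lemma Phi_rcons s i : Phi (rcons s i) = child (size s) (Phi s) i.
Proof. exact: Phia_rcons. Qed.

Lemma Phi_prefix s t : prefix s t -> prefix (Phi s) (Phi t).
Proof.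
move=> /prefixP [u ->]; elim/last_ind: u => [|u i IH]; first by rewrite cats0; exact: prefix_refl.
rewrite -rcons_cat Phi_rcons; apply: prefix_trans IH _.
by case: (child_sp (size (s ++ u)) (Phi (s ++ u)) i).
Qed.

Lemma Phi_size s : (size s <= size (Phi s))%N.
Proof.
elim/last_ind: s => [//|s i IH]; rewrite Phi_rcons size_rcons.
exact: leq_ltn_trans IH (sp_size (child_sp _ _ _)).
Qed.

Definition LH s := [set x | L (Phi s) x /\ ~ A x].

Lemma LH_cov s x : LH s x <-> exists i, LH (rcons s i) x.
Proof.
split.
  move=> h; have [i hi] := (child_cov (size s) (Phi s) x).1 h.
  by exists i; rewrite /LH /= Phi_rcons.
move=> [i]; rewrite /LH /= Phi_rcons => hi; apply: (child_cov (size s) (Phi s) x).2.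
by exists i.
Qed.

Lemma LH_disj s i j x : LH (rcons s i) x -> LH (rcons s j) x -> i = j.
Proof. rewrite /LH /= !Phi_rcons => -[h _] [h' _]; exact: child_disj h h'. Qed.

Lemma LH_root : LH [::] = ~` A.
Proof. by apply/seteqP; split => x /=; [case|split]. Qed.

Lemma rcons_of (s t : seq nat) : prefix s t -> size t = (size s).+1 ->
  t = rcons s (nth 0 t (size s)).
Proof.
move=> st E; have lt : (size s < size t)%N by rewrite E.
by rewrite -{1}(take_size t) E (take_nth 0 lt) -(prefix_takeE st).
Qed.

Lemma LH_branch (B : set (seq nat)) : schain B ->
  (forall C, schain C -> B `<=` C -> C = B) ->
  exists q, forall y, (forall x, B x -> LH x y) <-> y = q.
Proof.
move=> ch mx; have [b [bB [bU bP]]] := branch_seq ch mx.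
pose P n := Phi (b n).
have PP : forall n, prefix (P n) (P n.+1) by move=> n; apply: Phi_prefix.
have PS : forall n, (n <= size (P n))%N.
  by move=> n; rewrite -{1}((bB n).2); exact: Phi_size.
have [q hq] := Lbr PP PS.
have Lq : forall n, L (P n) q by apply/hq.
have Pmono : forall m n, (m <= n)%N -> L (P n) `<=` L (P m).
  by move=> m n mn; apply: L_mono => //; apply: chain_mono.
have nAq : ~ A q.
  move=> Aq.
  pose W j := P j.*2.
  have exm : forall j, exists a, minP (W j) a.
    by move=> j; apply: min_ex; exists q; split => //; exact: Lq.
  have Wnext : forall j a, minP (W j) a -> ~ L (P j.*2.+1) a.
    move=> j a ma.
    have Eb : b j.*2.+1 = rcons (b j.*2) (nth 0 (b j.*2.+1) (size (b j.*2))).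
      by apply: rcons_of; [exact: bP|rewrite !(bB _).2].
    rewrite /P Eb Phi_rcons (bB _).2 /child odd_double.
    case: (dec_spec (Phi (b j.*2))) => [[a' [ma' ->]]|[nA _]].
      by rewrite (min_uniq ma ma'); exact: Dnode_nota.
    by exfalso; case: ma => Aa [La _]; exact: nA La.
  have claim : forall j a, minP (W j) a -> (j <= e a)%N.
    elim=> [//|j IH] a' ma'.
    have [a ma] := exm j.
    have := IH a ma; case: (ma) => Aa [La mina]; case: (ma') => Aa' [La' mina'].
    have La'j : L (W j) a' by apply: Pmono La'; rewrite doubleS; lia.
    have le := mina a' Aa' La'j.
    have ne : a' <> a.
      move=> E; apply: (Wnext j a ma); rewrite -E.
      by apply: Pmono La'; rewrite doubleS.
    have ne2 : e a' <> e a by move=> E; apply: ne; apply: einj.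
    lia.
  have [a ma] := exm (e q).+1.
  have h1 := claim _ _ ma.
  case: ma => _ [_ mina]; have := mina q Aq (Lq _); lia.
exists q => y; split.
  by move=> h; apply/hq => n; case: (h _ (bB n).1).
move=> -> x Bx; rewrite (bU x Bx); split => //; exact: Lq.
Qed.


Definition avoid s n : nat :=
  if pselect (exists a, A a /\ e a = n /\ L (rcons s 0) a) then 1 else 0.

Fixpoint Qd u n := if n is n'.+1 then rcons (Qd u n') (avoid (Qd u n') n') else u.

Lemma diag u : exists y, L u y /\ ~ A y.
Proof.
have QP : forall n, prefix (Qd u n) (Qd u n.+1) by move=> n; exact: prefix_rcons.
have QS : forall n, size (Qd u n) = (size u + n)%N.
  by elim=> [|n IH] /=; rewrite ?addn0 // size_rcons IH addnS.
have QS' : forall n, (n <= size (Qd u n))%N by move=> n; rewrite QS leq_addl.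
have [q hq] := Lbr QP QS'.
have Lq : forall n, L (Qd u n) q by apply/hq.
exists q; split; first exact: (Lq 0).
move=> Aq; have := Lq (e q).+1; rewrite /= /avoid; case: pselect => h /=.
  case: h => a [Aa [ea La]] L1.
  have aq : a = q by apply: einj.
  by subst a; have := Ldisj La L1.
move=> L0; case: h; exists q; split => //.
Qed.

End HT.

Lemma height_gen (T : Type) (lt : T -> T -> Prop) (phi : T -> seq nat) (psi : seq nat -> T)
  (phiK : cancel phi psi) (psiK : cancel psi phi)
  (hlt : forall x y, lt x y <-> sp (phi x) (phi y)) v :
  card_eq [set y | lt y v] `I_(size (phi v)).
Proof.
apply/card_set_bijP; exists (fun y => size (phi y)); split.
- move=> y /= /hlt h; exact: sp_size h.
- move=> y z; rewrite !in_setE => /= /hlt [ys _] /hlt [zs _] E.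
  by apply: (can_inj phiK); rewrite (prefix_takeE ys) (prefix_takeE zs) E.
- move=> k /= ks; exists (psi (take k (phi v))); last first.
    by rewrite psiK size_takel //; exact: ltnW.
  apply/hlt; rewrite psiK; split; first exact: prefix_take.
  move=> E; have := congr1 size E; rewrite size_takel; last exact: ltnW.
  by move=> kE; move: ks; rewrite kE ltnn.
Qed.

Unset Implicit Arguments.
Set Strict Implicit.
Set Printing Implicit Defensive.

Theorem proposition15 (X : topologicalType) (F : foliage X) (A : set X) :
  baire_foliage_on setT F -> countable A ->
  exists H : foliage X, baire_foliage_on (~` A) H /\
    forall p, ~ A p ->
      exists f : nat -> nat, (forall m n, (m < n)%N -> (f m < f n)%N) /\
        forall U, nbhs p U ->
          [set (2 * n).+1 | n in [set n | rise F p U (f n)]]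
            `<=` rise H p (U `\` A).
Proof.
move=> [Fopen [Fls [[phi [phibij phi_lt]] [Fsb Froot]]]] /countable_injP [e einj0].
case: phibij => psi phiK psiK.
have einj : forall a b, A a -> A b -> e a = e b -> a = b.
  by move=> a b Aa Ab; apply: einj0; rewrite in_setE.
pose L := LF psi.
have Lcov : forall s x, L s x <-> exists i, L (rcons s i) x := LF_cov phiK psiK phi_lt Fls.
have Ldisj : forall s i j x, L (rcons s i) x -> L (rcons s j) x -> i = j :=
  LF_disj psiK phi_lt Fls.
have Lroot : forall x, L [::] x by move=> x; rewrite /L (LF_root phiK psiK phi_lt Froot).
have Lbr : forall P : nat -> seq nat, (forall n, prefix (P n) (P n.+1)) ->
    (forall n, (n <= size (P n))%N) -> exists q, forall y, (forall n, L (P n) y) <-> y = q.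
  by move=> P h1 h2; exact: (F_branch phiK psiK phi_lt Fls Fsb h1 h2).
pose LH0 := LH L A e.
have Hcov : forall s x, LH0 s x <-> exists i, LH0 (rcons s i) x :=
  LH_cov Lcov Ldisj Lroot Lbr A e.
have Hdisj : forall s i j x, LH0 (rcons s i) x -> LH0 (rcons s j) x -> i = j.
  exact: (LH_disj Lcov Ldisj Lroot).
pose H := Foliage (fun s t : seq nat => sp s t) LH0.
exists H; split.
  split.
    move=> s; exists (L (Phi L A e s)); split; first exact: LF_open.
    by apply/seteqP; split => x /=.
  split.
    move=> x _; split.
      apply/seteqP; split => y.
        move=> /Hcov [i hi]; exists (rcons x i) => //; apply/sons_sp; by exists i.
      move=> [t /sons_sp [i ->] ht]; apply/Hcov; by exists i.
    move=> s t /sons_sp [i ->] /sons_sp [j ->] ne; apply/seteqP; split => y // [h1 h2].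
    by apply: ne; rewrite (Hdisj _ _ _ _ h1 h2).
  split.
    exists id; split; first by exists id.
    by move=> x y.
  split.
    split; first by exists [::].
    move=> B [chB mxB].
    have [q hq] := LH_branch Lcov Ldisj Lroot Lbr einj chB mxB.
    exists q; apply/seteqP; split => y.
      by move=> h; apply/hq.
    by move=> /= ->; apply/hq.
  exists [::]; split.
    move=> x nx; split; [exact: prefix0s | exact/nesym].
  exact: LH_root.
move=> p nAp.
pose preH := pre LH0 p.
have LH0p : LH0 [::] p by rewrite /LH0 LH_root.
have preHm : forall n, LH0 (preH n) p := fun n => pre_mem Hcov n LH0p.
have sizeH : forall n, size (preH n) = n := size_pre LH0 p.
pose g k := size (Phi L A e (preH k)).
have gS : forall k, (g k < g k.+1)%N.
  by move=> k; rewrite /g /preH /= Phi_rcons; apply: sp_size; exact: child_sp.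
have gmono : forall m n, (m < n)%N -> (g m < g n)%N.
  move=> m n; elim: n => [//|n IH]; rewrite ltnS leq_eqVlt => /orP [/eqP ->|/IH h].
    exact: gS.
  exact: ltn_trans h (gS n).
exists (fun n => g n.*2.+1); split.
  by move=> m n mn; apply: gmono; rewrite ltnS ltn_double.
move=> U nU k [n /= [v [pv [hv ggv]]] <-].
set s := preH n.*2.+1.
set w := Phi L A e s.
have Ls : L w p by case: (preHm n.*2.+1).
have pvL : L (phi v) p by rewrite /L /LF phiK.
have hsz : size (phi v) = g n.*2.+1.
  have h1 := @height_gen _ (tlt F) phi psi phiK psiK phi_lt v.
  apply/esym/card_eq_II.
  by apply: card_eq_trans h1; rewrite card_eq_sym.
have Ew : pre L p (g n.*2.+1) = w := esym (mem_pre Lcov Ldisj Ls).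
have ev : phi v = w by rewrite (mem_pre Lcov Ldisj pvL) hsz Ew.
exists s; split; first exact: preHm.
split.
  have := @height_gen (seq nat) (tlt H) id id (fun _ => erefl) (fun _ => erefl)
    (fun x y => iff_refl _) s.
  by rewrite sizeH mul2n.
move=> D -> UAne.
have Up : U p := nbhs_singleton nU.
have Une : U <> set0 by move=> E; rewrite E in Up.
have [G' [[C' [C'sub [C'fin ->]]] [G'ne G'U]]] := ggv U erefl Une.
pose I := [set i | C' (psi (rcons w i))].
have nIfin : finite_set (~` I).
  apply: (sub_finite_set _ (finite_image (fun x => last 0 (phi x)) C'fin)).
  move=> i nIi; exists (psi (rcons w i)).
    split; last exact: nIi.
    apply/(F_sons psiK phi_lt); exists i; by rewrite psiK ev.
  by rewrite psiK last_rcons.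
have [i Ii] : exists i, I i.
  apply: contrapT => nI; apply: infinite_nat.
  apply: sub_finite_set nIfin => j _ Ij; apply: nI; by exists j.
have [y [Ly nAy]] := diag Ldisj Lbr einj (rcons w i).
exists (\bigcup_(t in (rcons s) @` I) LH0 t); split.
  exists ((rcons s) @` I); split.
    move=> t [j _ <-]; apply/sons_sp; by exists j.
  split; last by [].
  apply: (sub_finite_set _ (finite_image (rcons s) nIfin)).
  move=> t [/sons_sp [j ->] nC]; exists j => //; move=> Ij; apply: nC; by exists j.
split.
  move=> E; have : (\bigcup_(t in (rcons s) @` I) LH0 t) y.
    exists (rcons s i); first by exists i.
    split => //; rewrite /= Phi_rcons sizeH /child /= odd_double /=; exact: Ly.
  by rewrite E.
move=> x [t [j Ij <-] [Lx nAx]]; split => //.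
apply: G'U; exists (psi (rcons w j)) => //.
by move: Lx; rewrite Phi_rcons sizeH /child /= odd_double /=.
Qed.
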